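(* Let $q>0$. Let $I=(i_1,\dots,i_k)$ and $I'=(i'_1,\dots,i'_\ell)$ be two increasing sequences of positive integers with $i_k<i'_1$, and let $\pi\sim\mu_{n,q}$ for some $n\ge i'_\ell$. Then $\pi_I$ and $\pi_{I'}$ are independent.
   Context: For $q>0$ and $n\ge1$, $\mu_{n,q}(\pi)=q^{\mathrm{inv}(\pi)}/Z_{n,q}$ on $S_n$, with $\mathrm{inv}(\pi)$ the number of pairs $i<j$ with $\pi(i)>\pi(j)$ and $Z_{n,q}$ a normalizing constant. For a permutation $\pi$ and an increasing sequence of indices $I=(i_1,\dots,i_k)$, $\pi_I\in S_k$ denotes the induced relative ordering: $\pi_I(j)>\pi_I(j')$ if and only if $\pi(i_j)>\pi(i_{j'})$. *)

(* Defs.v *)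
From mathcomp Require Import all_boot all_order all_algebra all_fingroup.
Set Implicit Arguments. Unset Strict Implicit. Unset Printing Implicit Defensive.
Import Order.TTheory GRing.Theory Num.Theory.

(* Positions are 0-based: 'I_n = {0,...,n-1} stands for {1,...,n}. *)

Definition inv n (s : 'S_n) : nat :=
  #|[set p : 'I_n * 'I_n | (p.1 < p.2)%N && (s p.2 < s p.1)%N]|.

Local Open Scope ring_scope.

Definition mallows_Z (R : realFieldType) (n : nat) (q : R) : R :=
  \sum_(s : 'S_n) q ^+ inv s.

Definition mallows_prob (R : realFieldType) (n : nat) (q : R) (A : pred 'S_n) : R :=
  (\sum_(s : 'S_n | A s) q ^+ inv s) / mallows_Z n q.

Local Close Scope ring_scope.

Definition increasing_idx k n (I : 'I_k -> 'I_n) : Prop :=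
  forall j j' : 'I_k, (j < j')%N -> (I j < I j')%N.

(* The event "pi_I = sigma": sigma is the induced relative ordering of pi on I,
   i.e. sigma(j) > sigma(j') iff pi(i_j) > pi(i_j'). *)
Definition induced_is n k (s : 'S_n) (I : 'I_k -> 'I_n) (sigma : 'S_k) : bool :=
  [forall j : 'I_k, forall j' : 'I_k,
     (sigma j' < sigma j)%N == (s (I j') < s (I j))%N].

(* Main.v *)
Require Import Defs.
From mathcomp Require Import all_boot all_order all_algebra all_fingroup zify ring lra.
Import Order.TTheory GRing.Theory Num.Theory.
Set Implicit Arguments. Unset Strict Implicit. Unset Printing Implicit Defensive.

Section Pat.
Variables (n m : nat) (s : 'S_n) (e : 'I_m -> 'I_n) (e_inj : injective e).

Definition rk (i : 'I_m) : nat := #|[set j : 'I_m | s (e j) < s (e i)]|.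

Lemma rk_lt i : rk i < m.
Proof.
have : rk i <= #|[set~ i]|.
  apply: subset_leq_card; apply/subsetP => j; rewrite !inE.
  by apply: contraTneq => ->; rewrite ltnn.
rewrite cardsC1 card_ord; have := ltn_ord i; lia.
Qed.

Lemma rk_ltE i i' : (rk i < rk i') = (s (e i) < s (e i')).
Proof.
case: (ltnP (s (e i)) (s (e i'))) => h.
  apply: proper_card; apply/properP; split.
    by apply/subsetP => j; rewrite !inE => /ltn_trans; apply.
  by exists i; rewrite !inE ?h ?ltnn.
rewrite ltnNge; apply/negbF; apply: subset_leq_card; apply/subsetP => j.
by rewrite !inE => /leq_trans; apply.
Qed.

Lemma rk_inj : injective (fun i => Ordinal (rk_lt i)).
Proof.
move=> i i' /(congr1 val) /= h.
case: (ltngtP (s (e i)) (s (e i'))) => h'.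
- by move: h'; rewrite -rk_ltE h ltnn.
- by move: h'; rewrite -rk_ltE h ltnn.
- by apply: e_inj; apply: (@perm_inj _ s); apply: val_inj.
Qed.

Definition pat : 'S_m := perm rk_inj.

Lemma patE i : (pat i : nat) = rk i.
Proof. by rewrite /pat permE. Qed.

Lemma pat_ltE i i' : (pat i < pat i') = (s (e i) < s (e i')).
Proof. by rewrite !patE rk_ltE. Qed.

End Pat.

Lemma rankS_inj n (A : {set 'I_n}) x x' : x \in A -> x' \in A ->
  #|[set y in A | y < x]| = #|[set y in A | y < x']| -> x = x'.
Proof.
wlog h : x x' / x < x'.
  move=> W xA x'A E; case: (ltngtP x x') => h.
  - exact: W.
  - by apply/esym; apply: W.
  - exact: val_inj.
move=> xA x'A E; have : #|[set y in A | y < x]| < #|[set y in A | y < x']|.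
  apply: proper_card; apply/properP; split.
    by apply/subsetP => j; rewrite !inE => /andP[-> /ltn_trans]; apply.
  by exists x; rewrite !inE ?h ?ltnn ?xA.
by rewrite E ltnn.
Qed.

Section Split.
Variables (n p : nat) (hp : p <= n).

Definition pfx : 'I_p -> 'I_n := widen_ord hp.
Lemma sfx_proof (j : 'I_(n - p)) : p + j < n.
Proof. have := ltn_ord j; lia. Qed.
Definition sfx (j : 'I_(n - p)) : 'I_n := Ordinal (sfx_proof j).

Lemma pfx_inj : injective pfx.
Proof. by move=> i j /(congr1 val) /= h; apply: val_inj. Qed.
Lemma sfx_inj : injective sfx.
Proof. move=> i j /(congr1 val) /= h; apply: val_inj => /=; lia. Qed.

Lemma pfx_range (y : 'I_n) : y < p -> {i | y = pfx i}.
Proof. move=> h; exists (Ordinal h); exact: val_inj. Qed.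
Lemma sfx_range (y : 'I_n) : p <= y -> {i | y = sfx i}.
Proof.
move=> h; have h' : y - p < n - p by have := ltn_ord y; lia.
by exists (Ordinal h'); apply: val_inj => /=; lia.
Qed.

Definition Sset (s : 'S_n) : {set 'I_n} := [set s (pfx i) | i : 'I_p].

Lemma memS (s : 'S_n) y : (s y \in Sset s) = (y < p).
Proof.
apply/imsetP/idP.
  by case=> i _ /perm_inj ->; rewrite /= ltn_ord.
by move=> h; case: (pfx_range h) => i ->; exists i.
Qed.

Lemma cardS (s : 'S_n) : #|Sset s| = p.
Proof.
rewrite card_imset ?cardsT ?card_ord //.
by move=> i j /perm_inj /pfx_inj.
Qed.

Lemma rk_pfx (s : 'S_n) i : rk s pfx i = #|[set y in Sset s | y < s (pfx i)]|.
Proof.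
have inj : injective (fun j => s (pfx j)) by move=> a b /perm_inj /pfx_inj.
rewrite /rk -(card_imset _ inj); apply: eq_card => y; rewrite !inE.
apply/imsetP/andP => [[j] | [/imsetP [j _ ->] h]].
  by rewrite inE => h ->; split => //; rewrite memS /= ltn_ord.
by exists j; rewrite ?inE.
Qed.

Lemma rk_sfx (s : 'S_n) i : rk s sfx i = #|[set y in ~: Sset s | y < s (sfx i)]|.
Proof.
have inj : injective (fun j => s (sfx j)) by move=> a b /perm_inj /sfx_inj.
rewrite /rk -(card_imset _ inj); apply: eq_card => y; rewrite !inE.
apply/imsetP/andP => [[j] | [hy h]].
  by rewrite inE => h ->; rewrite memS /=; split => //; rewrite -leqNgt leq_addr.
move: hy; rewrite -{1}(permKV s y) memS -leqNgt => /sfx_range [j hj].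
by exists j; rewrite ?inE -hj permKV.
Qed.

Lemma f_inj : injective (fun s : 'S_n => (Sset s, (pat s pfx_inj, pat s sfx_inj))).
Proof.
move=> s1 s2 [eS ep es]; apply/permP => x.
case: (ltnP x p) => h.
- case: (pfx_range h) => i ->.
  have := congr1 (fun a : 'S_p => val (a i)) ep; rewrite /= !patE !rk_pfx eS.
  by apply: rankS_inj; [rewrite -eS memS /= ltn_ord | rewrite memS /= ltn_ord].
- case: (sfx_range h) => i ->.
  have := congr1 (fun a : 'S_(n-p) => val (a i)) es; rewrite /= !patE !rk_sfx eS.
  by apply: rankS_inj; rewrite inE ?memS -?leqNgt ?leq_addr // -eS memS -leqNgt leq_addr.
Qed.

End Split.

Definition Inv n (s : 'S_n) : {set 'I_n * 'I_n} :=
  [set p : 'I_n * 'I_n | (p.1 < p.2)%N && (s p.2 < s p.1)%N].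

Lemma invE n (s : 'S_n) : Defs.inv s = #|Inv s|.
Proof. by []. Qed.

Lemma inv_pat n m (s : 'S_n) (e : 'I_m -> 'I_n) (e_inj : injective e)
  (Rg : pred 'I_n) (hR : forall i, Rg (e i)) (hR' : forall y, Rg y -> exists i, y = e i)
  (mono : forall i j, (e i < e j) = (i < j)) :
  Defs.inv (pat s e_inj) = #|[set y in Inv s | Rg y.1 && Rg y.2]|.
Proof.
rewrite invE.
have -> : #|Inv (pat s e_inj)| = #|[set x : 'I_m * 'I_m | (x.1 < x.2) && (s (e x.2) < s (e x.1))]|.
  by apply: eq_card => x; rewrite !inE pat_ltE.
have Einj : injective (fun x : 'I_m * 'I_m => (e x.1, e x.2)).
  by move=> [a b] [c d] /= [/e_inj -> /e_inj ->].
rewrite -(card_imset _ Einj); apply: eq_card => y; rewrite !inE.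
apply/imsetP/idP.
  by case=> [[a b]]; rewrite inE /= => /andP[h1 h2] ->; rewrite /= mono h1 h2 !hR.
case: y => [y1 y2] /= /andP[/andP[h1 h2] /andP[/hR' [a Ea] /hR' [b Eb]]].
subst y1 y2; by exists (a, b) => //; rewrite inE /= -mono h1.
Qed.

Section Dec.
Variables (n p : nat) (hp : p <= n).

Definition Cr (S : {set 'I_n}) : nat :=
  #|[set xy : 'I_n * 'I_n | (xy.1 \in S) && (xy.2 \notin S) && (xy.2 < xy.1)]|.

Lemma inv_dec (s : 'S_n) :
  Defs.inv s = Defs.inv (pat s (@pfx_inj _ _ hp)) + Defs.inv (pat s (@sfx_inj _ _ hp)) + Cr (Sset hp s).
Proof.
rewrite (@inv_pat _ _ _ _ _ (fun y : 'I_n => y < p)); first last.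
- by move=> i j.
- by move=> y /(pfx_range hp) [i ->]; exists i.
- by move=> i; rewrite /= ltn_ord.
rewrite (@inv_pat _ _ _ _ _ (fun y : 'I_n => p <= y)); first last.
- by move=> i j; rewrite /= ltn_add2l.
- by move=> y /(sfx_range hp) [i ->]; exists i.
- by move=> i; rewrite /= leq_addr.
rewrite invE -(cardsID [set y : 'I_n * 'I_n | y.1 < p] (Inv s)).
rewrite -(cardsID [set y : 'I_n * 'I_n | y.2 < p] (Inv s :&: _)).
have Pinj : injective (fun y : 'I_n * 'I_n => (s y.1, s y.2)).
  by move=> [a b] [c d] /= [/perm_inj -> /perm_inj ->].
have e1 : #|Inv s :&: [set y : 'I_n * 'I_n | y.1 < p] :&: [set y : 'I_n * 'I_n | y.2 < p]|
   = #|[set y in Inv s | (y.1 < p) && (y.2 < p)]|.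
  by apply: eq_card => y; rewrite !inE andbA.
have e2 : #|Inv s :\: [set y : 'I_n * 'I_n | y.1 < p]|
   = #|[set y in Inv s | (p <= y.1) && (p <= y.2)]|.
  apply: eq_card => y; rewrite !inE -!leqNgt.
  case: (leqP p y.1) => a; case: (ltnP y.1 y.2) => b; case: (leqP p y.2) => c;
    rewrite /= ?andbT ?andbF //; lia.
have e3 : #|Inv s :&: [set y : 'I_n * 'I_n | y.1 < p] :\: [set y : 'I_n * 'I_n | y.2 < p]|
   = Cr (Sset hp s).
  rewrite /Cr -[in LHS](card_imset _ Pinj); apply: eq_card => z.
  apply/imsetP/idP; rewrite ?inE.
    case=> [[a b]]; rewrite !inE /= => /and3P[h1 /andP[h2 h3] h4] ->.
    by rewrite /= !memS h1 h3 h4.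
  case: z => [x y] /=; rewrite -(permKV s x) -(permKV s y) !memS => /andP[/andP[h1 h2] h3].
  exists ((s^-1)%g x, (s^-1)%g y) => //; rewrite !inE /= h1 h2 h3 /=.
  by rewrite -leqNgt in h2; rewrite andbT (leq_trans h1 h2).
by rewrite e1 e2 e3; lia.
Qed.
End Dec.

Section Fact.
Variables (R : realFieldType) (q : R) (n p : nat) (hp : p <= n).

Definition fdec (s : 'S_n) : {set 'I_n} * ('S_p * 'S_(n - p)) :=
  (Sset hp s, (pat s (@pfx_inj _ _ hp), pat s (@sfx_inj _ _ hp))).

Lemma fdec_img : fdec @: setT = [set t : {set 'I_n} * ('S_p * 'S_(n - p)) | #|t.1| == p].
Proof.
apply/eqP; rewrite eqEcard; apply/andP; split.
  by apply/subsetP => t /imsetP [s _ ->]; rewrite inE /= cardS.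
rewrite card_imset; last exact: f_inj.
have -> : [set t : {set 'I_n} * ('S_p * 'S_(n - p)) | #|t.1| == p]
   = setX [set S : {set 'I_n} | #|S| == p] setT.
  by apply/setP => t; rewrite !inE andbT.
rewrite cardsX card_draws !cardsT card_ord card_prod !card_Sn bin_fact //.
Qed.

Local Open Scope ring_scope.

Lemma factor (g1 : 'S_p -> R) (g2 : 'S_(n - p) -> R) :
  \sum_(s : 'S_n) g1 (pat s (@pfx_inj _ _ hp)) * g2 (pat s (@sfx_inj _ _ hp)) * q ^+ Defs.inv s
  = (\sum_(S : {set 'I_n} | #|S| == p) q ^+ Cr S) *
    ((\sum_a g1 a * q ^+ Defs.inv a) * (\sum_b g2 b * q ^+ Defs.inv b)).
Proof.
pose G (t : {set 'I_n} * ('S_p * 'S_(n - p))) :=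
  g1 t.2.1 * g2 t.2.2 * q ^+ (Defs.inv t.2.1 + Defs.inv t.2.2 + Cr t.1)%N.
transitivity (\sum_(s in [set: 'S_n]) G (fdec s)).
  by apply: eq_big => [s|s _]; rewrite ?inE // /G /= -inv_dec.
rewrite -big_imset /=; last by move=> a b _ _; apply: f_inj.
rewrite fdec_img.
transitivity (\sum_(S : {set 'I_n} | #|S| == p) \sum_(ab : 'S_p * 'S_(n - p)) G (S, ab)).
  rewrite pair_big_dep /=; apply: eq_big => [[S ab]|[S ab] _]; rewrite ?inE ?andbT //.
rewrite big_distrlr mulr_suml; apply: eq_bigr => S _.
rewrite mulr_sumr; rewrite -(pair_big predT predT (fun a b => G (S, (a, b)))) /=.
apply: eq_bigr => a _; rewrite mulr_sumr; apply: eq_bigr => b _.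
by rewrite /G /= !exprD; ring.
Qed.
End Fact.
Unset Implicit Arguments.

Lemma sum_ind (R : realFieldType) n (P : pred 'S_n) (F : 'S_n -> R) :
  (\sum_(s | P s) F s = \sum_s (P s)%:R * F s)%R.
Proof.
by rewrite big_mkcond; apply: eq_bigr => s _; case: (P s); rewrite ?mul1r ?mul0r.
Qed.

Theorem lemma2p5 (R : realFieldType) (q : R) (hq : (0 < q)%R)
  (n k l : nat) (I : 'I_k -> 'I_n) (I' : 'I_l -> 'I_n)
  (hI : increasing_idx I) (hI' : increasing_idx I')
  (hsep : forall (j : 'I_k) (j' : 'I_l), (I j < I' j')%N) :
  forall (sigma : 'S_k) (tau : 'S_l),
    @mallows_prob R n q (fun s => induced_is s I sigma && induced_is s I' tau)
    = (@mallows_prob R n q (fun s => induced_is s I sigma)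
       * @mallows_prob R n q (fun s => induced_is s I' tau))%R.
Proof.
move=> sigma tau.
have [p [Ilt [hp I'ge]]] : exists p, (forall j, I j < p)%N /\ (p <= n)%N /\ (forall j, p <= I' j)%N.
  exists (\big[maxn/0%N]_(j : 'I_k) (I j).+1); split; last split.
  - by move=> j; exact: (@leq_bigmax _ (fun j => (I j).+1) j).
  - by apply/bigmax_leqP => j _; exact: ltn_ord.
  - by move=> j; apply/bigmax_leqP => j' _; exact: hsep.
have I'lt j : (I' j - p < n - p)%N by have := ltn_ord (I' j); have := I'ge j; lia.
pose Ip j : 'I_p := Ordinal (Ilt j).
pose I'p j : 'I_(n - p) := Ordinal (I'lt j).
have pI j : pfx hp (Ip j) = I j by apply: val_inj.
have sI j : sfx hp (I'p j) = I' j by apply: val_inj => /=; have := I'ge j; lia.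
pose e1 (a : 'S_p) := [forall j, forall j', (sigma j' < sigma j) == (a (Ip j') < a (Ip j))]%N.
pose e2 (b : 'S_(n - p)) :=
  [forall j, forall j', (tau j' < tau j) == (b (I'p j') < b (I'p j))]%N.
have E1 s : induced_is s I sigma = e1 (pat s (@pfx_inj _ _ hp)).
  by apply: eq_forallb => j; apply: eq_forallb => j'; rewrite pat_ltE !pI.
have E2 s : induced_is s I' tau = e2 (pat s (@sfx_inj _ _ hp)).
  by apply: eq_forallb => j; apply: eq_forallb => j'; rewrite pat_ltE !sI.
rewrite /mallows_prob /mallows_Z.
have F := factor q hp.
have H11 : (\sum_(s | induced_is s I sigma && induced_is s I' tau) q ^+ Defs.inv s
   = (\sum_(S : {set 'I_n} | #|S| == p) q ^+ Cr S) *
    ((\sum_a (e1 a)%:R * q ^+ Defs.inv a) * (\sum_b (e2 b)%:R * q ^+ Defs.inv b)))%R.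
  rewrite sum_ind; apply: (eq_trans _ (F (fun a => (e1 a)%:R)%R (fun b => (e2 b)%:R)%R)).
  by apply: eq_bigr => s _; rewrite E1 E2; case: (e1 _); case: (e2 _); rewrite /= ?mul1r ?mul0r.
have H10 : (\sum_(s | induced_is s I sigma) q ^+ Defs.inv s
   = (\sum_(S : {set 'I_n} | #|S| == p) q ^+ Cr S) *
    ((\sum_a (e1 a)%:R * q ^+ Defs.inv a) * (\sum_(b : 'S_(n - p)) 1 * q ^+ Defs.inv b)))%R.
  rewrite sum_ind; apply: (eq_trans _ (F (fun a => (e1 a)%:R)%R (fun b => 1)%R)).
  by apply: eq_bigr => s _; rewrite E1 /= mulr1.
have H01 : (\sum_(s | induced_is s I' tau) q ^+ Defs.inv s
   = (\sum_(S : {set 'I_n} | #|S| == p) q ^+ Cr S) *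
    ((\sum_(a : 'S_p) 1 * q ^+ Defs.inv a) * (\sum_b (e2 b)%:R * q ^+ Defs.inv b)))%R.
  rewrite sum_ind; apply: (eq_trans _ (F (fun a => 1)%R (fun b => (e2 b)%:R)%R)).
  by apply: eq_bigr => s _; rewrite E2 /= mul1r.
have H00 : (\sum_(s : 'S_n) q ^+ Defs.inv s
   = (\sum_(S : {set 'I_n} | #|S| == p) q ^+ Cr S) *
    ((\sum_(a : 'S_p) 1 * q ^+ Defs.inv a) * (\sum_(b : 'S_(n - p)) 1 * q ^+ Defs.inv b)))%R.
  apply: (eq_trans _ (F (fun a => 1)%R (fun b => 1)%R)).
  by apply: eq_bigr => s _; rewrite /= !mul1r.
have Zp : (0 < \sum_(s : 'S_n) q ^+ Defs.inv s)%R.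
  rewrite (bigD1 1%g) //=.
  have h1 : (0 < q ^+ Defs.inv (1%g : 'S_n))%R by rewrite exprn_gt0.
  have h2 : (0 <= \sum_(s : 'S_n | s != 1%g) q ^+ Defs.inv s)%R.
    by apply: sumr_ge0 => s _; rewrite exprn_ge0 // ltW.
  lra.
rewrite H11 H10 H01 H00; rewrite H00 in Zp.
move: Zp; set c := (\sum_(S | _) _)%R; set A1 := (\sum_a (e1 a)%:R * _)%R;
  set B1 := (\sum_b (e2 b)%:R * _)%R; set A0 := (\sum_(a : 'S_p) 1 * _)%R;
  set B0 := (\sum_(b : 'S_(n - p)) 1 * _)%R.
move=> /gt_eqF /negbT; rewrite !mulf_eq0 !negb_or => /andP[hc /andP[ha hb]].
by field; rewrite hc ha hb.
Qed.
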